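(* Let $T(z)=\dfrac{az+b}{cz+d}$ with $a,c\in\mathbb{C}\setminus\{0\}$, $b,d\in\mathbb{C}$ and $ad-bc=1$. Then $z=-b/a$ is a superattracting fixed point of $St_T$, the finite extraneous fixed points $z_e=\dfrac{(a-2d)\pm\sqrt{a^2-4}}{2c}$ are rationally indifferent fixed points of $St_T$, and $\infty$ is a superattracting fixed point of $St_T$.
   Context: For a non-constant rational function $f$, Stirling's iterative root-finding method is $St_f(z)=z-\dfrac{f(z)}{f'\big(z-f(z)\big)}$, regarded as a rational self-map of $\widehat{\mathbb{C}}$. An extraneous fixed point of $St_f$ is a fixed point which is not a zero of $f$. Superattracting means multiplier $0$; rationally indifferent means multiplier $e^{2\pi i\theta}$ with $\theta\in\mathbb{Q}$; the multiplier at $\infty$ of a rational map $F$ is $G'(0)$ with $G(z)=1/F(1/z)$. *)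

(* Defs.v *)
From HB Require Import structures.
From mathcomp Require Import all_boot all_order all_algebra.
From mathcomp Require Import complex.
From mathcomp Require Import reals trigo.
Set Implicit Arguments.
Unset Strict Implicit.
Unset Printing Implicit Defensive.
Import Order.TTheory GRing.Theory Num.Theory.
Local Open Scope ring_scope.

(* Rational functions over a field K, represented as (numerator,      *)
(* denominator) pairs of polynomials; the rational map of the Riemann *)
(* sphere they define is obtained after cancelling the gcd.           *)
Section RatFun.
Variable K : fieldType.

Definition ratfun := ({poly K} * {poly K})%type.

Definition rf_id : ratfun := ('X, 1).

Definition rf_sub (f g : ratfun) : ratfun :=
  (f.1 * g.2 - g.1 * f.2, f.2 * g.2).

Definition rf_div (f g : ratfun) : ratfun := (f.1 * g.2, f.2 * g.1).

Definition rf_deriv (f : ratfun) : ratfun :=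
  (f.1^`() * f.2 - f.1 * f.2^`(), f.2 ^+ 2).

(* composition f o g : with f = p/q, N = max(deg p, deg q), g = r/s,
   f(g) = (sum_i p_i r^i s^(N-i)) / (sum_i q_i r^i s^(N-i)) *)
Definition rf_comp (f g : ratfun) : ratfun :=
  let N := (maxn (size f.1) (size f.2)).-1 in
  (\sum_(i < size f.1) f.1`_i *: (g.1 ^+ i * g.2 ^+ (N - i)),
   \sum_(i < size f.2) f.2`_i *: (g.1 ^+ i * g.2 ^+ (N - i))).

Definition rf_reduce (f : ratfun) : ratfun :=
  (f.1 %/ gcdp f.1 f.2, f.2 %/ gcdp f.1 f.2).

(* value at a finite point z, as a point of the Riemann sphere
   (None = infinity) *)
Definition rf_eval (f : ratfun) (z : K) : option K :=
  let g := rf_reduce f in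
  if g.2.[z] == 0 then None else Some (g.1.[z] / g.2.[z]).

Definition rf_inv : ratfun := (1, 'X).

(* G(z) = 1 / F(1/z), the conjugate of F by z |-> 1/z, used at infinity *)
Definition rf_at_inf (f : ratfun) : ratfun := rf_comp rf_inv (rf_comp f rf_inv).

Definition rf_fixed (f : ratfun) (z : K) : Prop := rf_eval f z = Some z.

(* multiplier at a finite point z (meaningful when f(z) is finite):
   the derivative of the (reduced) rational function at z *)
Definition rf_mult (f : ratfun) (z : K) : K :=
  let d := rf_deriv (rf_reduce f) in d.1.[z] / d.2.[z].

Definition rf_fixed_inf (f : ratfun) : Prop := rf_fixed (rf_at_inf f) 0.
Definition rf_mult_inf (f : ratfun) : K := rf_mult (rf_at_inf f) 0.

Definition rf_zero (f : ratfun) (z : K) : Prop := rf_eval f z = Some 0.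

Definition stirling (f : ratfun) : ratfun :=
  rf_sub rf_id (rf_div f (rf_comp (rf_deriv f) (rf_sub rf_id f))).

Definition moebius (a b c d : K) : ratfun :=
  (a%:P * 'X + b%:P, c%:P * 'X + d%:P).

End RatFun.

Section Cplx.
Variable R : realType.
Local Notation C := R[i].

Definition expi2pi (theta : rat) : C :=
  Complex (cos (2 * pi * ratr theta)) (sin (2 * pi * ratr theta)).

Definition superattracting_fixed (f : ratfun C) (z : C) : Prop :=
  rf_fixed f z /\ rf_mult f z = 0.

Definition superattracting_fixed_inf (f : ratfun C) : Prop :=
  rf_fixed_inf f /\ rf_mult_inf f = 0.

Definition rationally_indifferent_fixed (f : ratfun C) (z : C) : Prop :=
  rf_fixed f z /\ exists theta : rat, rf_mult f z = expi2pi theta.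

Definition extraneous_fixed (f : ratfun C) (z : C) : Prop :=
  rf_fixed (stirling f) z /\ ~ rf_zero f z.

End Cplx.

(* Main.v *)
Require Import Defs.
From HB Require Import structures.
From mathcomp Require Import all_boot all_order all_algebra.
From mathcomp Require Import complex.
From mathcomp Require Import reals trigo.
From mathcomp Require Import ring lra zify.
Import Order.TTheory GRing.Theory Num.Theory.
Local Open Scope ring_scope.

Definition hornerS := (hornerD, hornerN, hornerM, hornerC, hornerX, hornerZ, horner_exp, hornerXn, hornerMn, horner0, hornerCM).
Lemma reduce_eval (K : fieldType) (p q : {poly K}) z : q.[z] != 0 ->
  rf_eval (p,q) z = Some (p.[z]/q.[z]) /\
  rf_mult (p,q) z = (p^`().[z] * q.[z] - p.[z] * q^`().[z]) / q.[z] ^+ 2.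
Proof.
move=> hqz.
rewrite /rf_eval /rf_mult /rf_reduce /rf_deriv /=.
set g := gcdp p q.
have hp : p = (p %/ g) * g by rewrite divpK // dvdp_gcdl.
have hq : q = (q %/ g) * g by rewrite divpK // dvdp_gcdr.
move: (p %/ g) (q %/ g) hp hq => p' q' hp hq.
rewrite hq hornerM mulf_eq0 negb_or in hqz.
case/andP: hqz => hq' hg.
rewrite (negbTE hq'); split.
  by rewrite hp hq !hornerM; congr Some; field; rewrite hq' hg.
rewrite hp hq !derivE !hornerS.
field; rewrite hq' hg //.
Qed.


Lemma comp_inv (K : fieldType) (u v : {poly K}) : rf_comp (rf_inv K) (u, v) = (v, u).
Proof.
rewrite /rf_comp /rf_inv /= size_poly1 size_polyX /=.
rewrite big_ord1 !big_ord_recr big_ord0 /= !coefE /=.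
by rewrite scale1r scale0r add0r add0r scale1r !expr0 !mul1r expr1 mulr1.
Qed.

Lemma coef_homsum (K : fieldType) (p : {poly K}) n N k :
  (\sum_(i < n) p`_i *: (1 ^+ i * 'X^(N - i)))`_k = \sum_(i < n) p`_i * (k == (N - i)%N)%:R.
Proof.
rewrite coef_sum; apply: eq_bigr => i _.
by rewrite coefZ expr1n mul1r coefXn.
Qed.

Lemma inf_lemma (K : fieldType) (P S : {poly K}) :
  size P = 6 -> P`_5 != 0 -> (size S <= 4)%N ->
  rf_eval (rf_at_inf (P, S)) 0 = Some 0 /\ rf_mult (rf_at_inf (P, S)) 0 = 0.
Proof.
move=> hP hP5 hS.
have hm : (maxn (size P) (size S)).-1 = 5%N.
  by rewrite hP (maxn_idPl _) //; apply: leq_trans hS _.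
rewrite /rf_at_inf [rf_comp (P, S) _]surjective_pairing comp_inv /rf_comp /= hm.
set U := \sum_(i < size P) _.
set V := \sum_(i < size S) _.
have hU : U`_0 = P`_5.
  rewrite /U coef_homsum hP (bigD1 (Ordinal (isT : (5 < 6)%N))) //= big1 ?addr0 ?mulr1 //.
  move=> [i hi] /= hne; rewrite eq_sym subn_eq0.
  have -> : (5 <= i)%N = false by apply/negbTE; rewrite -ltnNge; move: hi hne; case: i => [|[|[|[|[|[|]]]]]].
  by rewrite mulr0.
have hV k : (k <= 1)%N -> V`_k = 0.
  move=> hk; rewrite /V coef_homsum big1 // => [[i hi]] _ /=.
  have -> : (k == 5 - i)%N = false.
    apply/negbTE; apply/eqP => e; have : (i < 4)%N by apply: leq_trans hi hS.
    lia.
  by rewrite mulr0.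
have hU0 : U.[0] != 0 by rewrite horner_coef0 hU.
have [-> ->] := @reduce_eval _ V U 0 hU0.
by rewrite !horner_coef0 coef_deriv !hV // mul0rn !mul0r subr0 mul0r.
Qed.

Lemma null_eval (K : fieldType) (p q : {poly K}) z : q.[z] = 0 -> p.[z] != 0 ->
  rf_eval (p,q) z = None.
Proof.
move=> hqz hpz.
rewrite /rf_eval /rf_reduce /=.
set g := gcdp p q.
have hp : p = (p %/ g) * g by rewrite divpK // dvdp_gcdl.
have hq : q = (q %/ g) * g by rewrite divpK // dvdp_gcdr.
move: (p %/ g) (q %/ g) hp hq => p' q' hp hq.
rewrite hp hornerM mulf_eq0 negb_or in hpz.
case/andP: hpz => _ hg.
move: hqz; rewrite hq hornerM => /eqP; rewrite mulf_eq0 (negbTE hg) orbF => ->.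
done.
Qed.

Lemma sq_expand (K : fieldType) (c d : K) :
  (c%:P * 'X + d%:P) ^+ 2 = (c ^+ 2)%:P * 'X^2 + (2 * c * d)%:P * 'X + (d ^+ 2)%:P.
Proof. rewrite !(rmorphM, rmorphD, rmorphXn, rmorph_nat) /=. ring. Qed.

Lemma stirling_eq (K : fieldType) (a b c d : K) (hc : c != 0) (hdet : a * d - b * c = 1) :
  let A := a%:P * 'X + b%:P in let s := c%:P * 'X + d%:P in
  let r := 'X * s - A * 1 in
  stirling (moebius a b c d) =
   ('X * (s * s ^+ 2) - A * (c *: r + d *: s) ^+ 2 * 1, 1 * (s * s ^+ 2)).
Proof.
move=> A s r.
have hD : A^`() * s - A * s^`() = 1.
  rewrite (_ : 1 = (a*d-b*c)%:P); last by rewrite hdet.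
  rewrite /A /s !derivE !(rmorphM, rmorphD, rmorphB) /=; ring.
have hs : size (s ^+ 2) = 3.
  have hss : size s = 2 by rewrite /s size_MXaddC polyC_eq0 (negbTE hc) size_polyC hc.
  have h1 := size_exp s 2; rewrite hss in h1.
  have hpos : (0 < size (s ^+ 2))%N.
    by rewrite size_poly_gt0 expf_neq0 // -size_poly_eq0 hss.
  by rewrite -(prednK hpos) h1.
rewrite /stirling /rf_sub /rf_div /rf_comp /rf_deriv /moebius /rf_id /=.
rewrite -/A -/s hD hs size_poly1 /=.
rewrite big_ord1 !big_ord_recr big_ord0 /= sq_expand.
rewrite !coefE /=.
rewrite /r /A /s -!mul_polyC !(rmorphM, rmorphD, rmorphB, rmorphXn, rmorph_nat, rmorph0, rmorph1) /=.
congr pair; ring.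
Qed.

Lemma fin_Qroot (K : fieldType) (s A Q : {poly K}) z :
  s.[z] != 0 -> Q.[z] = 0 ->
  rf_eval ('X * (s * s ^+ 2) - A * Q ^+ 2 * 1, 1 * (s * s ^+ 2)) z = Some z /\
  rf_mult ('X * (s * s ^+ 2) - A * Q ^+ 2 * 1, 1 * (s * s ^+ 2)) z = 1.
Proof.
move=> hs hQ.
have hS : (1 * (s * s ^+ 2)).[z] != 0.
  by rewrite !hornerS mul1r !mulf_neq0 // expf_neq0.
have [-> ->] := @reduce_eval _ ('X * (s * s ^+ 2) - A * Q ^+ 2 * 1) _ _ hS.
split.
  congr Some; rewrite !hornerS hQ; field.
  by rewrite hs.
rewrite !expr2 !derivE !hornerS hQ; field.
by rewrite hs.
Qed.

Lemma fin_z0 (K : fieldType) (s A Q : {poly K}) z a :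
  a != 0 -> A.[z] = 0 -> A^`().[z] = a -> s.[z] = a^-1 -> Q.[z] = a^-2 ->
  rf_eval ('X * (s * s ^+ 2) - A * Q ^+ 2 * 1, 1 * (s * s ^+ 2)) z = Some z /\
  rf_mult ('X * (s * s ^+ 2) - A * Q ^+ 2 * 1, 1 * (s * s ^+ 2)) z = 0.
Proof.
move=> ha hA hA' hs hQ.
have hS : (1 * (s * s ^+ 2)).[z] != 0.
  by rewrite !hornerS mul1r hs !mulf_neq0 // ?expf_neq0 // invr_eq0.
have [-> ->] := @reduce_eval _ ('X * (s * s ^+ 2) - A * Q ^+ 2 * 1) _ _ hS.
split.
  congr Some; rewrite !hornerS hA hs; field; by rewrite ha oner_neq0.
rewrite !expr2 !derivE !hornerS hA hA' hs hQ; field; by rewrite ha oner_neq0.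
Qed.

Lemma lin_props (K : fieldType) (k1 k0 : K) : k1 != 0 ->
  size (k1%:P * 'X + k0%:P) = 2 /\ lead_coef (k1%:P * 'X + k0%:P) = k1.
Proof.
move=> hk; split.
  by rewrite size_MXaddC polyC_eq0 (negbTE hk) size_polyC hk.
rewrite lead_coefDl ?lead_coefMX ?lead_coefC //.
by rewrite size_mulX ?polyC_eq0 // !size_polyC hk ltnS leq_b1.
Qed.

Lemma St_inf_sizes (K : fieldType) (a b c d : K) : a != 0 -> c != 0 ->
  let A := a%:P * 'X + b%:P in let s := c%:P * 'X + d%:P in
  let r := 'X * s - A * 1 in let Q := c *: r + d *: s in
  let P := 'X * (s * s ^+ 2) - A * Q ^+ 2 * 1 in
  [/\ size P = 6, P`_5 != 0 & (size (1 * (s * s ^+ 2))%R <= 4)%N].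
Proof.
move=> ha hc A s r Q P.
have [hsA hlA] := lin_props _ a b ha.
have [hss hls] := lin_props _ c d hc.
have hc2 : c ^+ 2 != 0 by rewrite expf_neq0.
have [hsL hlL] := lin_props _ (c ^+ 2) (c * (2 * d - a)) hc2.
set L := (c ^+ 2)%:P * 'X + (c * (2 * d - a))%:P in hsL hlL.
have hQ : Q = L * 'X + (d ^+ 2 - b * c)%:P.
  rewrite /Q /r /A /s /L -!mul_polyC !(rmorphM, rmorphD, rmorphB, rmorphXn, rmorph_nat) /=; ring.
have hL0 : L != 0 by rewrite -size_poly_eq0 hsL.
have hsQ : size Q = 3.
  by rewrite hQ size_MXaddC (negbTE hL0) hsL.
have hlQ : lead_coef Q = c ^+ 2.
  rewrite hQ lead_coefDl ?lead_coefMX //.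
  by rewrite size_mulX // hsL size_polyC; case: (_ != 0).
have hQ0 : Q != 0 by rewrite -size_poly_eq0 hsQ.
have hA0 : A != 0 by rewrite -size_poly_eq0 hsA.
have hsQ2 : size (Q ^+ 2) = 5 by rewrite expr2 size_mul // hsQ.
have hQ20 : Q ^+ 2 != 0 by rewrite expf_neq0.
have hsAQ : size (A * Q ^+ 2 * 1) = 6 by rewrite mulr1 size_mul // hsA hsQ2.
have hlAQ : lead_coef (A * Q ^+ 2 * 1) = a * (c ^+ 2 * c ^+ 2).
  by rewrite mulr1 lead_coefM expr2 lead_coefM hlA hlQ.
have hsW : (size (s * s ^+ 2)%R <= 4)%N.
  apply: leq_trans (size_polyMleq _ _) _; rewrite hss.
  apply: leq_trans (leqnn _) _.
  have := size_polyMleq s s; rewrite -expr2 hss /=.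
  move=> h; case: (size (s ^+ 2)) h => [|[|[|[|]]]] //.
have hsXW : (size ('X * (s * s ^+ 2))%R <= 5)%N.
  apply: leq_trans (size_polyMleq _ _) _; rewrite size_polyX /=.
  by move: hsW; case: (size _) => [|[|[|[|[|]]]]].
split.
- rewrite (_ : P = - (A * Q ^+ 2 * 1) + 'X * (s * s ^+ 2)); last by rewrite /P addrC.
  rewrite size_polyDl ?size_polyN ?hsAQ //.
- rewrite /P coefD coefN (nth_default 0 hsXW) sub0r oppr_eq0.
  have -> : 5%N = (size (A * Q ^+ 2 * 1)).-1 by rewrite hsAQ.
  by rewrite -lead_coefE hlAQ !mulf_neq0.
- by rewrite mul1r.
Qed.

Theorem mainTheorem13 (R : realType) (a b c d : R[i])
  (ha : a != 0) (hc : c != 0) (hdet : a * d - b * c = 1) :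
  let T := moebius a b c d in
  [/\ superattracting_fixed (stirling T) (- b / a),
      (forall s : R[i], s ^+ 2 = a ^+ 2 - 4 ->
         extraneous_fixed T (((a - 2 * d) + s) / (2 * c)) /\
         rationally_indifferent_fixed (stirling T) (((a - 2 * d) + s) / (2 * c)) /\
         extraneous_fixed T (((a - 2 * d) - s) / (2 * c)) /\
         rationally_indifferent_fixed (stirling T) (((a - 2 * d) - s) / (2 * c))),
      (forall z : R[i], extraneous_fixed T z ->
         exists2 s : R[i], s ^+ 2 = a ^+ 2 - 4 & z = ((a - 2 * d) + s) / (2 * c))
    & superattracting_fixed_inf (stirling T)].
Proof.
move=> T.
have h2 : (2 : R[i]) != 0 by rewrite pnatr_eq0.
have h4 : (4 : R[i]) != 0 by rewrite pnatr_eq0.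
pose A := a%:P * 'X + b%:P.
pose s := c%:P * 'X + d%:P.
pose r := 'X * s - A * 1.
pose Q := c *: r + d *: s.
have hT : T = (A, s) by [].
have hst : stirling T = ('X * (s * s ^+ 2) - A * Q ^+ 2 * 1, 1 * (s * s ^+ 2)) :=
  @stirling_eq _ a b c d hc hdet.
have hsz z : s.[z] = c * z + d by rewrite /s !hornerS.
have hAz z : A.[z] = a * z + b by rewrite /A !hornerS.
have hQz z : Q.[z] = c * (z * (c * z + d) - (a * z + b)) + d * (c * z + d).
  by rewrite /Q /r /A /s !hornerS; ring.
have key z : a * s.[z] - c * A.[z] = 1 by rewrite hsz hAz -hdet; ring.
have hd : d = (1 + b * c) / a.
  by rewrite -hdet; field; rewrite ?ha.
have hA'z z : A^`().[z] = a by rewrite /A !derivE !hornerS; ring.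
have [h1 h5 h3] : [/\ size ('X * (s * s ^+ 2) - A * Q ^+ 2 * 1) = 6,
   ('X * (s * s ^+ 2) - A * Q ^+ 2 * 1)`_5 != 0 &
   (size (1 * (s * s ^+ 2))%R <= 4)%N] := @St_inf_sizes _ a b c d ha hc.
clearbody A s r Q.
have hnz z : Q.[z] = 0 -> s.[z] != 0 /\ A.[z] != 0.
  move=> hq; have k := key z; split; apply/eqP => h0.
    have : Q.[z] = a * s.[z] - c * A.[z] by rewrite hQz -(hsz z) -(hAz z) h0; ring.
    by rewrite hq k => /eqP; rewrite eq_sym oner_eq0.
  have : Q.[z] = s.[z] ^+ 2 by rewrite hQz -(hsz z) -(hAz z) h0 hsz; ring.
  rewrite hq => /eqP; rewrite eq_sym expf_eq0 /= => /eqP hs0.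
  by move: k; rewrite hs0 h0 !mulr0 subrr => /eqP; rewrite eq_sym oner_eq0.
have root e : e ^+ 2 = a ^+ 2 - 4 ->
   extraneous_fixed T (((a - 2 * d) + e) / (2 * c)) /\
   rationally_indifferent_fixed (stirling T) (((a - 2 * d) + e) / (2 * c)).
  move=> he; set z := ((a - 2 * d) + e) / (2 * c).
  have hq0 : Q.[z] = 0.
    rewrite hQz; transitivity ((e ^+ 2 - (a ^+ 2 - 4)) / 4 + (a * d - b * c - 1)).
      by rewrite /z; field; rewrite ?hc ?h2 ?h4.
    by rewrite he hdet !subrr mul0r addr0.
  have [hs0 hA0] := hnz z hq0.
  have [F1 F2] := @fin_Qroot _ s A Q z hs0 hq0.
  split; last first.
    split; first by rewrite /rf_fixed hst.
    exists 0%Q; rewrite hst F2 /expi2pi rmorph0 !mulr0 cos0 sin0 //.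
  split; first by rewrite /rf_fixed hst.
  rewrite /rf_zero hT (proj1 (@reduce_eval _ A s z hs0)) => -[] /eqP.
  by rewrite mulf_eq0 invr_eq0 (negbTE hA0) (negbTE hs0).
split.
- rewrite /superattracting_fixed /rf_fixed hst.
  apply: (@fin_z0 _ s A Q (- b / a) a ha).
  + by rewrite hAz; field; rewrite ?ha.
  + exact: hA'z.
  + by rewrite hsz hd; field; rewrite ?ha.
  + by rewrite hQz hd; field; rewrite ?ha.
- move=> e he.
  have [E1 E2] := root e he.
  have [E3 E4] := root (- e) (ltac:(by rewrite sqrrN)).
  by split; [|split; [|split]].
- move=> z [hfix hnzT].
  case hs: (s.[z] == 0).
    exfalso; have hsz0 := eqP hs; have k := key z; rewrite hsz0 in k.
    have hQz1 : Q.[z] = 1.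
      by rewrite -k hQz -(hsz z) -(hAz z) hsz0; ring.
    have hAz0 : A.[z] != 0.
      by apply/eqP => h0; move: k; rewrite h0 !mulr0 subrr => /eqP; rewrite eq_sym oner_eq0.
    have hP : ('X * (s * s ^+ 2) - A * Q ^+ 2 * 1).[z] != 0.
      rewrite !hornerS hsz0 hQz1; apply/eqP => h; move/eqP: hAz0; apply; apply: oppr_inj; rewrite oppr0 -h; ring.
    have hS : (1 * (s * s ^+ 2)).[z] = 0 by rewrite !hornerS hsz0 !mul0r mulr0.
    by move: hfix; rewrite /rf_fixed hst (@null_eval _ _ _ z hS hP).
  move/negbT: hs => hs0.
  have hAz0 : A.[z] != 0.
    apply/eqP => h0; apply: hnzT.
    by rewrite /rf_zero hT (proj1 (@reduce_eval _ A s z hs0)) h0 mul0r.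
  have hS : (1 * (s * s ^+ 2)).[z] != 0.
    by rewrite !hornerS mul1r !mulf_neq0 // expf_neq0.
  move: hfix; rewrite /rf_fixed hst (proj1 (@reduce_eval _ _ _ z hS)) => -[] hfz.
  have E : A.[z] * Q.[z] ^+ 2 =
      z * (1 * (s * s ^+ 2)).[z] - ('X * (s * s ^+ 2) - A * Q ^+ 2 * 1).[z].
    by rewrite !hornerS; ring.
  have hPz : ('X * (s * s ^+ 2) - A * Q ^+ 2 * 1).[z] = z * (1 * (s * s ^+ 2)).[z].
    by rewrite -(divfK hS (('X * (s * s ^+ 2) - A * Q ^+ 2 * 1).[z])) hfz.
  rewrite hPz subrr in E.
  move/eqP: E; rewrite mulf_eq0 (negbTE hAz0) /= expf_eq0 /= => /eqP hq0.
  exists (2 * c * z - (a - 2 * d)).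
    transitivity (4 * Q.[z] + a ^+ 2 - 4 * (a * d - b * c)).
      by rewrite hQz; ring.
    by rewrite hq0 hdet; ring.
  by field; rewrite ?hc ?h2.
- rewrite /superattracting_fixed_inf /rf_fixed_inf /rf_mult_inf /rf_fixed hst.
  exact: (@inf_lemma _ _ _ h1 h5 h3).
Qed.
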